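(* Assume the linear setting below. For every integer $k\ge0$ and every integer $n$ with $s^k\le n<s^{k+1}$, \[ b_{s^{k+1}-1}\le b_n\le b_{s^k}. \]
   Context: Linear setting: integers $q\ge2$, $r\in\{0,1,\dots,q-1\}$, $p>q+r$; $A=\{d\in\{0,1,\dots,p-1\}: d\equiv r\pmod q\}$, $s=\#A\ge2$, and $h(i)=qi+r$ for $0\le i\le s-1$. For a positive integer $n$ with base-$s$ expansion $n=\sum_{i=0}^k\varepsilon_i s^i$ ($\varepsilon_k\ne0$), $a_n=\sum_{i=0}^k h(\varepsilon_i)p^i$ and $b_n=a_n/n^{\log_s p}$. *)

(* Defs.v *)
From Stdlib Require Import Reals Arith List.
Open Scope R_scope.

Definition A_set (q r p : nat) : list nat :=
  filter (fun d => Nat.eqb (d mod q) (r mod q)) (seq 0 p).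
Definition s_of (q r p : nat) : nat := length (A_set q r p).

Definition h (q r i : nat) : nat := (q * i + r)%nat.

(* base-b digits of n, least significant first: [eps_0; ...; eps_k]
   (no leading zeros; fuel n suffices for b >= 2) *)
Fixpoint digits_aux (b fuel n : nat) : list nat :=
  match fuel with
  | O => nil
  | S f => if Nat.eqb n 0 then nil else (n mod b)%nat :: digits_aux b f (n / b)%nat
  end.
Definition digits (b n : nat) : list nat := digits_aux b n n.

Fixpoint eval_digits (g : nat -> nat) (p : nat) (l : list nat) : nat :=
  match l with
  | nil => O
  | e :: l' => (g e + p * eval_digits g p l')%nat
  end.

Definition a_seq (q r p n : nat) : nat :=
  eval_digits (h q r) p (digits (s_of q r p) n).

Definition b_seq (q r p n : nat) : R :=
  INR (a_seq q r p n) /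
  Rpower (INR n) (ln (INR p) / ln (INR (s_of q r p))).

(* Main.v *)
Require Import Defs.
From Stdlib Require Import Reals Arith List Lra Lia Psatz.
Open Scope R_scope.

Section Conv.
Variable al : R.
Hypothesis hal : 1 <= al.
Let pw x := Rpower x al.

Lemma pw_pos x : 0 < pw x.
Proof. unfold pw, Rpower. apply exp_pos. Qed.

Lemma SL a b a' b' : 0 < a -> a < b -> b <= a' -> a' < b' ->
  (pw b - pw a) * (b' - a') <= (pw b' - pw a') * (b - a).
Proof.
  intros Ha Hab Hba Hab'.
  destruct (MVT_cor2 (fun x => Rpower x al) (fun x => al * Rpower x (al - 1)) a b Hab)
    as [c1 [E1 H1]].
  { intros c Hc. apply derivable_pt_lim_power. lra. }
  destruct (MVT_cor2 (fun x => Rpower x al) (fun x => al * Rpower x (al - 1)) a' b' Hab')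
    as [c2 [E2 H2]].
  { intros c Hc. apply derivable_pt_lim_power. lra. }
  unfold pw. rewrite E1, E2.
  assert (Rpower c1 (al - 1) <= Rpower c2 (al - 1)).
  { apply Rle_Rpower_l; lra. }
  assert (0 <= (b - a) * (b' - a')) by nra.
  assert (al * Rpower c1 (al - 1) <= al * Rpower c2 (al - 1)) by nra.
  nra.
Qed.

Lemma K x y c : 0 < x -> x <= y -> 0 <= c ->
  pw (x + c) - pw x <= pw (y + c) - pw y.
Proof.
  intros Hx Hxy Hc.
  destruct (Req_dec c 0) as [->|Hc0]. { rewrite !Rplus_0_r. lra. }
  destruct (Req_dec x y) as [->|Hxy0]. lra.
  destruct (Rle_lt_dec (x + c) y) as [H|H].
  - pose proof (SL x (x+c) y (y+c) Hx ltac:(lra) H ltac:(lra)).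
    replace (x + c - x) with c in H0 by ring. replace (y + c - y) with c in H0 by ring.
    nra.
  - pose proof (SL x y (x+c) (y+c) Hx ltac:(lra) ltac:(lra) ltac:(lra)).
    replace (y + c - (x + c)) with (y - x) in H0 by ring.
    assert (0 < y - x) by lra. nra.
Qed.

Lemma C z s : 1 <= z -> z <= s ->
  (s - 1) * pw z <= (s - z) + (z - 1) * pw s.
Proof.
  intros H1 H2.
  assert (pw 1 = 1) by (unfold pw, Rpower; rewrite ln_1, Rmult_0_r; apply exp_0).
  destruct (Req_dec z 1) as [->|Hz1]. { rewrite H. lra. }
  destruct (Req_dec z s) as [->|Hzs]. lra.
  pose proof (SL 1 z z s ltac:(lra) ltac:(lra) ltac:(lra) ltac:(lra)).
  rewrite H in H0. nra.
Qed.

Lemma pw_ge x : 1 <= x -> x <= pw x.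
Proof.
  intros H. unfold pw. rewrite <- (Rpower_1 x) at 1 by lra.
  apply Rle_Rpower; lra.
Qed.

End Conv.
Open Scope nat_scope.

Lemma digits_aux_fuel b : (2 <= b)%nat -> forall f1 n f2, (n <= f1)%nat -> (n <= f2)%nat ->
  digits_aux b f1 n = digits_aux b f2 n.
Proof.
  intros Hb. induction f1 as [|f1 IH]; intros n f2 H1 H2.
  - assert (n = 0%nat) by lia. subst. destruct f2; reflexivity.
  - destruct f2 as [|f2]. { assert (n = 0%nat) by lia. subst. reflexivity. }
    simpl. destruct (Nat.eqb n 0) eqn:E. reflexivity.
    apply Nat.eqb_neq in E. f_equal. apply IH.
    + assert (n / b < n)%nat by (apply Nat.div_lt; lia). lia.
    + assert (n / b < n)%nat by (apply Nat.div_lt; lia). lia.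
Qed.

Lemma digits_rec b n : (2 <= b)%nat -> (1 <= n)%nat ->
  digits b n = (n mod b)%nat :: digits b (n / b).
Proof.
  intros Hb Hn. unfold digits. destruct n as [|n']. lia.
  simpl digits_aux at 1. replace (Nat.eqb (S n') 0) with false by reflexivity.
  f_equal. apply digits_aux_fuel; auto.
  assert (S n' / b < S n')%nat by (apply Nat.div_lt; lia). lia.
Qed.

Lemma digits0 b : digits b 0 = nil.
Proof. reflexivity. Qed.

Lemma eval_split q r p l :
  eval_digits (h q r) p l = (q * eval_digits (fun x => x) p l + r * eval_digits (fun _ => 1%nat) p l)%nat.
Proof.
  induction l; simpl. lia. rewrite IHl. unfold h. nia.
Qed.

Definition cc b p n := eval_digits (fun x => x) p (digits b n).
Definition EE b p n := eval_digits (fun _ => 1%nat) p (digits b n).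

Lemma cc_rec b p m e : (2 <= b)%nat -> (e < b)%nat -> (1 <= b*m+e)%nat ->
  cc b p (b*m+e) = (e + p * cc b p m)%nat.
Proof.
  intros Hb He Hn. unfold cc. rewrite digits_rec by auto. simpl.
  rewrite <- (Nat.div_unique (b*m+e) b m e), <- (Nat.mod_unique (b*m+e) b m e); auto.
Qed.

Lemma EE_rec b p m e : (2 <= b)%nat -> (e < b)%nat -> (1 <= b*m+e)%nat ->
  EE b p (b*m+e) = (1 + p * EE b p m)%nat.
Proof.
  intros Hb He Hn. unfold EE. rewrite digits_rec by auto. simpl.
  rewrite <- (Nat.div_unique (b*m+e) b m e); auto.
Qed.

Fixpoint RR p k := match k with O => 1%nat | S k => (1 + p * RR p k)%nat end.

Lemma EE_block b p k : (2 <= b)%nat -> forall n, (b ^ k <= n < b ^ (k+1))%nat -> EE b p n = RR p k.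
Proof.
  intros Hb. induction k; intros n Hn.
  - simpl in Hn. replace n with (b*0+n)%nat by lia. rewrite EE_rec by lia.
    unfold EE at 1. simpl. lia.
  - pose proof (Nat.div_mod n b ltac:(lia)). pose proof (Nat.mod_upper_bound n b ltac:(lia)).
    set (m := (n / b)%nat) in *. set (e := (n mod b)%nat) in *.
    pose proof (Nat.pow_nonzero b (S k) ltac:(lia)).
    rewrite H. rewrite EE_rec by lia. simpl. f_equal. f_equal. apply IHk.
    replace (S k + 1)%nat with (S (S k)) in Hn by lia. replace (k+1)%nat with (S k) by lia.
    simpl in Hn. simpl. nia.
Qed.

Lemma cc_pow b p k : (2 <= b)%nat -> cc b p (b ^ k) = (p ^ k)%nat.
Proof.
  intros Hb. induction k. simpl. replace 1%nat with (b*0+1)%nat by lia.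
  rewrite cc_rec by lia. unfold cc at 1. simpl. lia.
  simpl. replace (b * b^k)%nat with (b * b^k + 0)%nat by lia.
  pose proof (Nat.pow_nonzero b k ltac:(lia)).
  rewrite cc_rec by lia. rewrite IHk. lia.
Qed.

Lemma cc_top b p k : (2 <= b)%nat -> cc b p (b ^ (k+1) - 1) = ((b - 1) * RR p k)%nat.
Proof.
  intros Hb. induction k.
  - simpl. replace (b*1-1)%nat with (b*0 + (b-1))%nat by lia.
    rewrite cc_rec by lia. unfold cc at 1. simpl. lia.
  - pose proof (Nat.pow_nonzero b (k+1) ltac:(lia)).
    replace (b ^ (S k + 1) - 1)%nat with (b * (b^(k+1) - 1) + (b-1))%nat.
    2:{ replace (S k + 1)%nat with (S (k+1)) by lia. simpl. nia. }
    rewrite cc_rec by nia. rewrite IHk. simpl. nia.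
Qed.
Open Scope R_scope.

Section M.
Variables s p : nat.
Hypothesis Hs : (2 <= s)%nat.
Hypothesis Hsp : (s <= p)%nat.
Let al := ln (INR p) / ln (INR s).
Let pw x := Rpower x al.

Lemma Rs : 2 <= INR s. Proof. replace 2 with (INR 2) by (simpl; lra). apply le_INR; auto. Qed.
Lemma Rp : INR s <= INR p. Proof. apply le_INR; auto. Qed.

Lemma hal : 1 <= al.
Proof.
  pose proof Rs. pose proof Rp. unfold al.
  assert (0 < ln (INR s)) by (rewrite <- ln_1; apply ln_increasing; lra).
  assert (ln (INR s) <= ln (INR p)).
  { destruct (Req_dec (INR s) (INR p)) as [E|E]. rewrite E; lra.
    left. apply ln_increasing; lra. }
  apply Rmult_le_reg_r with (ln (INR s)); auto. unfold Rdiv. rewrite Rmult_assoc, Rinv_l; lra.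
Qed.

Lemma pw_s : pw (INR s) = INR p.
Proof.
  pose proof Rs. pose proof Rp. unfold pw, Rpower, al.
  assert (0 < ln (INR s)) by (rewrite <- ln_1; apply ln_increasing; lra).
  replace (ln (INR p) / ln (INR s) * ln (INR s)) with (ln (INR p)) by (field; lra).
  apply exp_ln. lra.
Qed.

Lemma pw_mul x y : 0 < x -> 0 < y -> pw (x * y) = pw x * pw y.
Proof. intros. unfold pw. rewrite Rpower_mult_distr; auto. Qed.

Lemma pw1 : pw 1 = 1.
Proof. unfold pw, Rpower. rewrite ln_1, Rmult_0_r. apply exp_0. Qed.

Lemma pw_powk k : pw (INR (s ^ k)) = INR (p ^ k).
Proof.
  induction k. simpl. apply pw1.
  rewrite !pow_INR in *. simpl. rewrite pw_mul. rewrite pw_s, IHk. reflexivity.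
  pose proof Rs; lra. apply pow_lt. pose proof Rs; lra.
Qed.

Lemma upper n : (1 <= n)%nat -> INR (cc s p n) <= pw (INR n).
Proof.
  induction n as [n IH] using lt_wf_ind. intros Hn.
  pose proof (Nat.div_mod n s ltac:(lia)). pose proof (Nat.mod_upper_bound n s ltac:(lia)).
  set (m := (n / s)%nat) in *. set (e := (n mod s)%nat) in *.
  assert (Hm : (m < n)%nat) by (apply Nat.div_lt; lia).
  rewrite H. rewrite cc_rec by lia. pose proof hal as Hal.
  destruct (Nat.eq_dec m 0) as [Hm0|Hm0].
  - rewrite Hm0. unfold cc. simpl digits. simpl eval_digits. replace (s*0+e)%nat with e by lia. replace (e + p*0)%nat with e by lia.
    apply pw_ge; auto. replace 1 with (INR 1) by reflexivity. apply le_INR. lia.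
  - specialize (IH m Hm ltac:(lia)).
    rewrite plus_INR, mult_INR, plus_INR, mult_INR.
    assert (1 <= INR m) by (replace 1 with (INR 1) by reflexivity; apply le_INR; lia).
    assert (0 <= INR e) by apply pos_INR.
    pose proof (K al Hal 1 (INR s * INR m) (INR e) ltac:(lra) ltac:(pose proof Rs; nra) ltac:(lra)).
    fold pw in H3. rewrite pw1 in H3.
    pose proof (pw_ge al Hal (1 + INR e) ltac:(lra)). fold pw in H4.
    rewrite pw_mul in H3 by (pose proof Rs; lra). rewrite pw_s in H3.
    assert (INR p * INR (cc s p m) <= INR p * pw (INR m)) by (apply Rmult_le_compat_l; [apply pos_INR|auto]).
    lra.
Qed.

Lemma lower n : (INR s - 1) * (pw (INR n + 1) - 1) <= (INR p - 1) * INR (cc s p n).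
Proof.
  induction n as [n IH] using lt_wf_ind.
  destruct (Nat.eq_dec n 0) as [->|Hn].
  { simpl. rewrite Rplus_0_l, pw1. unfold cc. simpl. lra. }
  pose proof (Nat.div_mod n s ltac:(lia)). pose proof (Nat.mod_upper_bound n s ltac:(lia)).
  set (m := (n / s)%nat) in *. set (e := (n mod s)%nat) in *.
  assert (Hm : (m < n)%nat) by (apply Nat.div_lt; lia).
  specialize (IH m Hm).
  rewrite H. rewrite cc_rec by lia. pose proof hal as Hal.
  rewrite !plus_INR, !mult_INR.
  pose proof Rs. pose proof Rp.
  assert (0 <= INR m) by apply pos_INR.
  assert (0 <= INR e) by apply pos_INR.
  assert (INR e <= INR s - 1) by (replace (INR s - 1) with (INR (s - 1)) by (rewrite minus_INR by lia; reflexivity); apply le_INR; lia).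
  pose proof (K al Hal (INR e + 1) (INR s * INR m + INR e + 1) (INR s - 1 - INR e)
     ltac:(lra) ltac:(nra) ltac:(lra)) as HK. fold pw in HK.
  replace (INR e + 1 + (INR s - 1 - INR e)) with (INR s) in HK by ring.
  replace (INR s * INR m + INR e + 1 + (INR s - 1 - INR e)) with (INR s * (INR m + 1)) in HK by ring.
  rewrite pw_mul in HK by lra. rewrite pw_s in HK.
  pose proof (C al Hal (INR e + 1) (INR s) ltac:(lra) ltac:(lra)) as HC. fold pw in HC.
  rewrite pw_s in HC.
  replace (INR s * INR m + INR e + 1) with (INR s * INR m + INR e + 1) by ring.
  assert (0 <= INR s - 1) by lra.
  assert (0 <= INR p - 1) by lra.
  nra.
Qed.

End M.

Lemma L2 al (hal : 1 <= al) n N : 1 <= n -> n <= N ->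
  (Rpower (N+1) al - 1) * Rpower n al <= (Rpower (n+1) al - 1) * Rpower N al.
Proof.
  intros H1 H2.
  set (pw := fun x => Rpower x al).
  assert (Hm : forall x y, 0 < x -> 0 < y -> pw (x*y) = pw x * pw y)
    by (intros; unfold pw; rewrite Rpower_mult_distr; auto).
  assert (pw1 : pw 1 = 1) by (unfold pw, Rpower; rewrite ln_1, Rmult_0_r; apply exp_0).
  pose proof (K al hal (/N) (/n) 1 ltac:(apply Rinv_0_lt_compat; lra)
     ltac:(apply Rinv_le_contravar; lra) ltac:(lra)) as HK.
  fold pw in HK. change (Rpower (N+1) al) with (pw (N+1)). change (Rpower (n+1) al) with (pw (n+1)).
  change (Rpower n al) with (pw n). change (Rpower N al) with (pw N).
  assert (E1 : pw N * pw (/N) = 1) by (rewrite <- Hm, Rinv_r; [apply pw1|lra|lra|apply Rinv_0_lt_compat; lra]).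
  assert (E2 : pw n * pw (/n) = 1) by (rewrite <- Hm, Rinv_r; [apply pw1|lra|lra|apply Rinv_0_lt_compat; lra]).
  assert (E3 : pw N * pw (/N + 1) = pw (N+1)).
  { rewrite <- Hm. f_equal. field. lra. lra. pose proof (Rinv_0_lt_compat N ltac:(lra)); lra. }
  assert (E4 : pw n * pw (/n + 1) = pw (n+1)).
  { rewrite <- Hm. f_equal. field. lra. lra. pose proof (Rinv_0_lt_compat n ltac:(lra)); lra. }
  rewrite <- E3, <- E4.
  replace (pw N * pw (/N+1) - 1) with (pw N * (pw (/N+1) - pw (/N))) by (rewrite Rmult_minus_distr_l; lra).
  replace (pw n * pw (/n+1) - 1) with (pw n * (pw (/n+1) - pw (/n))) by (rewrite Rmult_minus_distr_l; lra).
  assert (0 < pw N) by (unfold pw, Rpower; apply exp_pos).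
  assert (0 < pw n) by (unfold pw, Rpower; apply exp_pos).
  assert (0 < pw N * pw n) by nra.
  replace (pw N * (pw (/ N + 1) - pw (/ N)) * pw n) with
    ((pw N * pw n) * (pw (/ N + 1) - pw (/ N))) by ring.
  replace (pw n * (pw (/ n + 1) - pw (/ n)) * pw N) with
    ((pw N * pw n) * (pw (/ n + 1) - pw (/ n))) by ring.
  apply Rmult_le_compat_l; lra.
Qed.

Lemma div_le a b c d : 0 < b -> 0 < d -> a * d <= c * b -> a / b <= c / d.
Proof.
  intros. apply Rmult_le_reg_r with (b * d). nra.
  replace (a / b * (b * d)) with (a * d) by (field; lra).
  replace (c / d * (b * d)) with (c * b) by (field; lra). auto.
Qed.

Lemma RR_eq p k : (1 <= p)%nat -> (RR p k * (p - 1) + 1 = p ^ (k+1))%nat.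
Proof.
  intros Hp. destruct p as [|p']. lia. replace (S p' - 1)%nat with p' by lia.
  induction k. simpl. lia.
  replace (S k + 1)%nat with (S (k+1)) by lia. rewrite Nat.pow_succ_r'. simpl RR.
  rewrite <- IHk. nia.
Qed.

Theorem mainTheorem16 (q r p k n : nat) :
  (2 <= q)%nat -> (r < q)%nat -> (q + r < p)%nat ->
  (2 <= s_of q r p)%nat ->
  (s_of q r p ^ k <= n < s_of q r p ^ (k + 1))%nat ->
  b_seq q r p (s_of q r p ^ (k + 1) - 1)%nat <= b_seq q r p n
  <= b_seq q r p (s_of q r p ^ k)%nat.
Proof.
  intros Hq Hr Hp Hs Hn.
  assert (Hsp : (s_of q r p <= p)%nat).
  { unfold s_of, A_set. rewrite <- (length_seq p 0) at 2. apply filter_length_le. }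
  unfold b_seq, a_seq. rewrite !eval_split.
  set (s := s_of q r p) in *.
  change (eval_digits (fun x => x) p (digits s ?m)) with (cc s p m).
  change (eval_digits (fun _ => 1%nat) p (digits s ?m)) with (EE s p m).
  set (al := ln (INR p) / ln (INR s)).
  pose proof (hal s p Hs Hsp) as Hal. fold al in Hal.
  pose proof (Nat.pow_nonzero s k ltac:(lia)) as Hsk.
  assert (Hsk1 : (s ^ (k+1) = s * s ^ k)%nat) by (rewrite Nat.add_1_r; reflexivity).
  set (S := (s ^ k)%nat) in *.
  set (N := (s ^ (k+1) - 1)%nat).
  assert (HN : (S <= N)%nat) by (unfold N; nia).
  rewrite (EE_block s p k Hs n Hn), (EE_block s p k Hs S ltac:(unfold S; lia)),
    (EE_block s p k Hs N ltac:(unfold N; nia)).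
  replace (cc s p S) with (p^k)%nat by (unfold S; symmetry; apply cc_pow; auto).
  replace (cc s p N) with ((s-1)*RR p k)%nat by (unfold N; symmetry; apply cc_top; auto).
  set (R := RR p k).
  assert (HR : (INR p - 1) * INR R = INR (p ^ (k+1)) - 1).
  { pose proof (RR_eq p k ltac:(lia)). fold R in H.
    rewrite <- H, plus_INR, mult_INR, minus_INR by lia. simpl. lra. }
  assert (Hpw : forall m, Rpower (INR (s ^ m)) al = INR (p ^ m)) by (intro; apply pw_powk; auto).
  assert (HNp : INR N + 1 = INR (s ^ (k+1))).
  { unfold N. rewrite minus_INR by lia. simpl. lra. }
  assert (HS1 : 1 <= INR S) by (replace 1 with (INR 1) by reflexivity; apply le_INR; lia).
  assert (HnS : INR S <= INR n) by (apply le_INR; lia).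
  assert (HnN : INR n <= INR N) by (apply le_INR; unfold N; lia).
  assert (Hp3 : 3 <= INR p) by (replace 3 with (INR 3) by (simpl; lra); apply le_INR; lia).
  assert (Hs2 : 2 <= INR s) by (replace 2 with (INR 2) by (simpl; lra); apply le_INR; lia).
  assert (HpwSn : Rpower (INR S) al <= Rpower (INR n) al) by (apply Rle_Rpower_l; lra).
  assert (HpwnN : Rpower (INR n) al <= Rpower (INR N) al) by (apply Rle_Rpower_l; lra).
  assert (HpwS : Rpower (INR S) al = INR (p ^ k)) by apply Hpw.
  assert (Hpk : 0 < INR (p ^ k)) by (apply lt_0_INR; apply Nat.neq_0_lt_0; apply Nat.pow_nonzero; lia).
  assert (Hup : INR (cc s p n) <= Rpower (INR n) al) by (apply upper; auto; lia).
  assert (Hlo := lower s p Hs Hsp n). fold al in Hlo.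
  assert (HL2 := L2 al Hal (INR n) (INR N) ltac:(lra) HnN).
  rewrite HNp, Hpw in HL2.
  assert (0 <= INR q) by apply pos_INR. assert (0 <= INR r) by apply pos_INR.
  assert (0 <= INR R) by apply pos_INR.
  assert (0 <= INR (cc s p n)) by apply pos_INR.
  rewrite !plus_INR, !mult_INR.
  split; apply div_le; try lra.
  -
    assert (Hkey : (INR s - 1) * INR R * Rpower (INR n) al <= INR (cc s p n) * Rpower (INR N) al).
    { apply Rmult_le_reg_l with (INR p - 1). lra.
      replace ((INR p - 1) * ((INR s - 1) * INR R * Rpower (INR n) al)) with
        ((INR s - 1) * (((INR p - 1) * INR R) * Rpower (INR n) al)) by ring.
      rewrite HR.
      apply Rle_trans with ((INR s - 1) * ((Rpower (INR n + 1) al - 1) * Rpower (INR N) al)).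
      { apply Rmult_le_compat_l; lra. }
      replace ((INR p - 1) * (INR (cc s p n) * Rpower (INR N) al)) with
        (((INR p - 1) * INR (cc s p n)) * Rpower (INR N) al) by ring.
      rewrite <- Rmult_assoc. apply Rmult_le_compat_r.
      unfold Rpower; left; apply exp_pos. exact Hlo. }
    rewrite minus_INR by lia. change (INR 1) with 1.
    assert (INR q * ((INR s - 1) * INR R * Rpower (INR n) al) <= INR q * (INR (cc s p n) * Rpower (INR N) al))
      by (apply Rmult_le_compat_l; lra).
    assert (INR r * INR R * Rpower (INR n) al <= INR r * INR R * Rpower (INR N) al)
      by (apply Rmult_le_compat_l; nra).
    nra.
  - rewrite HpwS.
    assert (INR q * INR (cc s p n) * INR (p ^ k) <= INR q * Rpower (INR n) al * INR (p ^ k)) by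
      (apply Rmult_le_compat_r; [lra| apply Rmult_le_compat_l; lra]).
    assert (INR r * INR R * INR (p ^ k) <= INR r * INR R * Rpower (INR n) al) by
      (apply Rmult_le_compat_l; nra).
    nra.
Qed.
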